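(* Let $K_E$ be a partial $E$-field with $K$ algebraically closed, and let $\sigma:K\to K$ be a field automorphism of order two, $R=K^\sigma$, $i\in K$ with $i^2=-1$, and $\mathbb{S}^1=\{z\in K^\times: z\sigma(z)=1\}$. Then $\sigma\circ E=E\circ\sigma$ (as partial functions) if and only if the following three conditions hold: (1) $\sigma(\mathrm{dom}(E))=\mathrm{dom}(E)$; (2) $E(R\cap\mathrm{dom}(E))\subseteq R_{>0}$; (3) $E(iR\cap\mathrm{dom}(E))\subseteq\mathbb{S}^1$.
   Context: A partial $E$-field $K_E$ consists of a field $K$ of characteristic $0$, a $\mathbb{Q}$-vector subspace $\mathrm{dom}(E)\subseteq K$ and a group homomorphism $E:(\mathrm{dom}(E),+)\to(K^\times,\cdot)$. Since $K$ is algebraically closed of characteristic $0$ and $\sigma$ has order two, $R=K^\sigma$ is a real closed field, ordered with positive cone $R_{>0}$. *)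

(* Defs.v *)
From mathcomp Require Import all_boot all_order all_algebra.
Set Implicit Arguments. Unset Strict Implicit. Unset Printing Implicit Defensive.
Import GRing.Theory.
Local Open Scope ring_scope.

(* E is represented by a
   total function K -> K whose values outside dom(E) are irrelevant. *)
Definition partial_E_field (K : fieldType) (D : {pred K}) (E : K -> K) : Prop :=
  [/\ 0 \in D,
      (forall x y, x \in D -> y \in D -> x + y \in D),
      (forall (q : rat) x, x \in D -> ratr q * x \in D),
      (forall x, x \in D -> E x != 0)
    & (forall x y, x \in D -> y \in D -> E (x + y) = E x * E y)].

Definition fixedR (K : fieldType) (s : K -> K) (r : K) : Prop := s r = r.

(* the positive cone of the real closed field R = K^sigma:
   nonzero squares of elements of R (the unique ordering of R) *)
Definition R_pos (K : fieldType) (s : K -> K) (r : K) : Prop :=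
  fixedR s r /\ r != 0 /\ exists t, fixedR s t /\ r = t * t.

Definition circle1 (K : fieldType) (s : K -> K) (z : K) : Prop :=
  z != 0 /\ z * s z = 1.

(* sigma o E = E o sigma as partial functions:
   dom(sigma o E) = dom E, dom(E o sigma) = sigma^-1(dom E) *)
Definition commutes_partial (K : fieldType) (D : {pred K}) (E : K -> K)
  (s : K -> K) : Prop :=
  (forall x, (x \in D) <-> (s x \in D)) /\
  (forall x, x \in D -> s (E x) = E (s x)).

(* Main.v *)
Require Import Defs.
From mathcomp Require Import all_boot all_order all_algebra.
From mathcomp Require Import ring.
Import GRing.Theory.
Local Open Scope ring_scope.

Lemma sqrt_ex {K : closedFieldType} (w : K) : exists u : K, u ^+ 2 = w.
Proof.
have [x Hx] := @GRing.solve_monicpoly K 2 (fun j => if j == 0%N then w else 0) isT.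
exists x; rewrite Hx big_ord_recr big_ord_recr big_ord0 /=.
by rewrite mul0r add0r addr0 expr0 mulr1.
Qed.

Lemma sq_m1 {K : fieldType} (v i : K) : i ^+ 2 = -1 -> v ^+ 2 = -1 -> v = i \/ v = - i.
Proof.
move=> Hi Hv.
have : (v - i) * (v + i) == 0.
  by rewrite -subr_sqr Hi Hv subrr.
rewrite mulf_eq0 => /orP [/eqP H|/eqP H]; [left|right].
  by apply/eqP; rewrite -subr_eq0 H.
by apply/eqP; rewrite -(subr_eq0 v (-i)) opprK H.
Qed.

Lemma two_neq0 (K : fieldType) : [pchar K] =i pred0 -> (2 : K) != 0.
Proof. by move=> /pcharf0P H; rewrite (H 2%N). Qed.

Lemma s_i (K : closedFieldType) (s : {rmorphism K -> K}) (i : K) :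
  [pchar K] =i pred0 ->
  (forall x, s (s x) = x) -> (exists x, s x != x) ->
  i ^+ 2 = -1 -> s i = - i.
Proof.
move=> ch ss [z Hz] Hi.
have Hsi : s i ^+ 2 = -1 by rewrite -rmorphXn Hi rmorphN1.
case: (sq_m1 _ _ Hi Hsi) => // Hsii.
pose w := z - s z.
have w0 : w != 0 by rewrite /w subr_eq0 eq_sym.
have sw : s w = - w by rewrite /w rmorphB ss opprB.
have [u Hu] := sqrt_ex w.
have u0 : u != 0 by apply: contraNneq w0 => H; rewrite -Hu H expr0n.
have su0 : s u != 0 by rewrite fmorph_eq0.
pose v := s u / u.
have Hv : v ^+ 2 = -1.
  rewrite /v expr_div_n -rmorphXn Hu sw.
  by rewrite mulNr divff // expf_neq0.
have sv : s v = v^-1.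
  by rewrite /v fmorph_div ss invf_div.
have svv : s v = v.
  by case: (sq_m1 _ _ Hi Hv) => ->; rewrite ?rmorphN Hsii.
have v0 : v != 0 by rewrite /v mulf_neq0 ?invr_eq0.
have : v ^+ 2 = 1 by rewrite expr2 -{1}svv sv mulVf.
rewrite Hv => /eqP; rewrite -subr_eq0 -opprD oppr_eq0 => /eqP H.
by move: (two_neq0 _ ch); rewrite -H eqxx.
Qed.

Theorem proposition3p1 (K : closedFieldType) (D : {pred K}) (E : K -> K)
  (s : {rmorphism K -> K}) (i : K) :
  [pchar K] =i pred0 ->
  partial_E_field D E ->
  (forall x, s (s x) = x) -> (exists x, s x != x) ->
  i ^+ 2 = -1 ->
  commutes_partial D E s <->
  [/\ (forall y, (exists2 x, x \in D & y = s x) <-> y \in D),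
      (forall x, x \in D -> fixedR s x -> R_pos s (E x))
    & (forall x, x \in D -> (exists r, fixedR s r /\ x = i * r) ->
         circle1 s (E x))].
Proof.
move=> ch [D0 Dadd Dq Enz Ehom] ss nid Hi.
have Si := s_i _ _ _ ch ss nid Hi.
have t0 := two_neq0 _ ch.
have E0 : E 0 = 1.
  have := Ehom 0 0 D0 D0; rewrite addr0 => H.
  apply: (mulfI (Enz 0 D0)); by rewrite mulr1 -H.
have Dopp : forall x, x \in D -> - x \in D.
  by move=> x Hx; have := Dq (-1) x Hx; rewrite (ratr_int K (-1)) mulN1r.
have Dhalf : forall x, x \in D -> 2^-1 * x \in D.
  move=> x Hx; have := Dq (2^-1) x Hx.
  have -> : ratr (2^-1) = 2^-1 :> K.
    rewrite /ratr. have -> : numq (2^-1) = 1 by []. have -> : denq (2^-1) = 2 by [].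
    by rewrite mul1r.
  done.
have Eneg : forall x, x \in D -> E (- x) = (E x)^-1.
  move=> x Hx; have := Ehom x (-x) Hx (Dopp x Hx); rewrite subrr E0 => H.
  by apply: (mulfI (Enz x Hx)); rewrite -H mulfV ?Enz.
have s2 : s (2^-1) = 2^-1 by rewrite fmorphV rmorph_nat.
split.
- move=> [Dsym Ecomm]; split.
  + move=> y; split.
      by move=> [x Hx ->]; exact: (proj1 (Dsym x) Hx).
    move=> Hy; exists (s y); [exact: (proj1 (Dsym y) Hy) | by rewrite ss].
  + move=> x Hx sx; split; first by rewrite /fixedR Ecomm // sx.
    split; first exact: Enz.
    have Hh := Dhalf x Hx.
    exists (E (2^-1 * x)); split.
      by rewrite /fixedR Ecomm // rmorphM s2 sx.
    rewrite -Ehom //; congr E; field; exact: t0.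
  + move=> x Hx [r [sr Hxr]]; subst x; split; first by apply: Enz.
    by rewrite Ecomm // rmorphM Si sr mulNr -Ehom ?Dopp // subrr E0.
- move=> [D1 D2 D3].
  have Dsym : forall x, (x \in D) <-> (s x \in D).
    move=> x; split.
      by move=> Hx; apply: (proj1 (D1 _)); exists x.
    by move=> Hx; apply: (proj1 (D1 _)); exists (s x); rewrite ?ss.
  split => // x Hx.
  have Hsx : s x \in D by apply: (proj1 (Dsym x)).
  pose a := 2^-1 * (x + s x); pose b := 2^-1 * (x - s x).
  have Da : a \in D by apply: Dhalf; apply: Dadd.
  have Db : b \in D by apply: Dhalf; apply: Dadd => //; apply: Dopp.
  have xab : x = a + b by rewrite /a /b; field; exact: t0.
  have sxab : s x = a + - b by rewrite /a /b; field; exact: t0.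
  have sa : s a = a by rewrite /a rmorphM s2 rmorphD ss addrC.
  have sb : s b = - b by rewrite /a /b rmorphM s2 rmorphB ss; ring.
  have [sEa _] : R_pos s (E a) by apply: D2.
  have [_ sEb] : circle1 s (E b).
    apply: D3 => //; exists (- (i * b)); split.
      by rewrite /fixedR rmorphN rmorphM Si sb; ring.
    by rewrite mulrN mulrA -expr2 Hi; ring.
  have sEb' : s (E b) = (E b)^-1.
    by apply: (mulfI (Enz b Db)); rewrite sEb mulfV ?Enz.
  rewrite sxab Ehom ?Dopp // Eneg // -sEb' -[E a](sEa : s (E a) = E a) -rmorphM -Ehom //.
  by rewrite -xab.
Qed.
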